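(* Let $G$ be a finite simple undirected graph and $k \ge 1$ an integer. Suppose that $n \geq 3$ and that pairwise distinct $k$-cliques $A_1, \dots, A_n$ of $G$ are pairwise adjacent in $\mathsf{TS}_k(G)$. Then either there exist a clique $U \subseteq V(G)$ of size $k+1$ and pairwise distinct vertices $a_1, \dots, a_n \in U$ with $A_i = U \setminus \{a_i\}$ for all $1 \le i \le n$, or there exist a clique $I \subseteq V(G)$ of size $k-1$ and pairwise distinct vertices $a_1, \dots, a_n \in V(G) \setminus I$ with $A_i = I \cup \{a_i\}$ for all $1 \le i \le n$. In particular, if $n > k+1$, the second alternative holds.
   Context: A $k$-clique is a set of $k$ pairwise adjacent vertices. $\mathsf{TS}_k(G)$ is the graph whose vertices are the $k$-cliques of $G$, two $k$-cliques $C, C'$ being adjacent iff there are vertices $u,v$ with $C \setminus C' = \{u\}$, $C' \setminus C = \{v\}$ and $uv \in E(G)$. *)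

(* Defs.v *)
From mathcomp Require Import all_boot.
Set Implicit Arguments. Unset Strict Implicit. Unset Printing Implicit Defensive.

Definition simple_graph (T : finType) (e : rel T) : Prop :=
  symmetric e /\ irreflexive e.

Definition is_clique (T : finType) (e : rel T) (C : {set T}) : Prop :=
  forall u v, u \in C -> v \in C -> u != v -> e u v.

Definition is_kclique (T : finType) (e : rel T) (k : nat) (C : {set T}) : Prop :=
  is_clique e C /\ #|C| = k.

Definition TS_adj (T : finType) (e : rel T) (C C' : {set T}) : Prop :=
  exists u v, C :\: C' = [set u] /\ C' :\: C = [set v] /\ e u v.

Definition alt_star (T : finType) (e : rel T) (k n : nat)
  (A : 'I_n -> {set T}) : Prop :=
  exists (U : {set T}) (a : 'I_n -> T),
    [/\ is_clique e U, #|U| = k.+1, injective a,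
        (forall i, a i \in U) & (forall i, A i = U :\ a i)].

Definition alt_sun (T : finType) (e : rel T) (k n : nat)
  (A : 'I_n -> {set T}) : Prop :=
  exists (I : {set T}) (a : 'I_n -> T),
    [/\ is_clique e I, #|I| = k.-1, injective a,
        (forall i, a i \notin I) & (forall i, A i = a i |: I)].

(* Main.v *)
Require Import Defs.
From mathcomp Require Import all_boot.
From mathcomp Require Import zify.

Lemma inter_card (T : finType) (k : nat) (A B : {set T}) u :
  #|A| = k -> A :\: B = [set u] -> #|A :&: B| = k.-1.
Proof.
move=> hA hD. have := cardsD A B. rewrite hD cards1 hA.
have := subset_leq_card (subsetIl A B). rewrite hA. lia.
Qed.

Lemma star_bound (T : finType) (e : rel T) (k n : nat) (A : 'I_n -> {set T}) :
  alt_star e k A -> n <= k.+1.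
Proof.
case=> U [a [_ cU ai aU _]].
have := subset_leq_card (_ : [set a i | i in [set: 'I_n]] \subset U).
rewrite card_imset // cardsT card_ord cU; apply.
by apply/subsetP => x /imsetP [i _ ->].
Qed.

Theorem lemma3p1 (T : finType) (e : rel T) (k n : nat)
  (A : 'I_n -> {set T}) :
  simple_graph e -> 1 <= k -> 3 <= n ->
  injective A ->
  (forall i, is_kclique e k (A i)) ->
  (forall i j, i != j -> TS_adj e (A i) (A j)) ->
  (alt_star e k A \/ alt_sun e k A) /\ (k.+1 < n -> alt_sun e k A).
Proof.
move=> _ k1 n3 Ainj Ak Aadj.
have Acl i : is_clique e (A i) by case: (Ak i).
have Acard i : #|A i| = k by case: (Ak i).
have Aint i j : i != j -> #|A i :&: A j| = k.-1.
  by move=> /Aadj [u [v [h1 _]]]; exact: inter_card (Acard i) h1.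
have n0 : 0 < n by lia.
have n1 : 1 < n by lia.
pose i0 := Ordinal n0. pose i1 := Ordinal n1.
have i01 : i0 != i1 by [].
set I := A i0 :&: A i1. set U := A i0 :|: A i1.
have cI : #|I| = k.-1 := Aint _ _ i01.
have cU : #|U| = k.+1.
  rewrite cardsU cI !Acard; lia.
have IU : I \subset U by apply: subset_trans (subsetIl _ _) (subsetUl _ _).
have key i w : w \in I -> w \notin A i -> A i = U :\ w.
  move=> wI wAi.
  have side j : w \in A j -> A j :\ w \subset A i.
    move=> wj.
    case: (eqVneq i j) => [eij|nij]; first by rewrite eij wj in wAi.
    have e0 : A i :&: A j = A j :\ w.
      apply/eqP; rewrite eqEcard; apply/andP; split.
        apply/subsetP => y; rewrite !inE => /andP[yi ->]; rewrite andbT.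
        by apply: contraNneq wAi => <-.
      rewrite (Aint i j nij); have := cardsD1 w (A j); rewrite wj Acard; lia.
    by rewrite -e0 subsetIl.
  have w0 : w \in A i0 by move: wI; rewrite inE => /andP[].
  have w1 : w \in A i1 by move: wI; rewrite inE => /andP[].
  apply/eqP; rewrite eq_sym eqEcard; apply/andP; split.
    by rewrite setDUl subUset !side.
  have wU : w \in U by rewrite inE w0.
  have := cardsD1 w U; rewrite wU Acard cU; lia.
have [star|sun] : alt_star e k A \/ alt_sun e k A.
  case: (boolP [forall i, A i \subset U]) => [/forallP allU | /forallPn [j nj]].
    left.
    have ex i : exists x, x \in U /\ A i = U :\ x.
      have : #|U :\: A i| == 1.
        by rewrite cardsD (setIidPr (allU i)) cU Acard; apply/eqP; lia.
      move/cards1P => [x hx].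
      have : x \in U :\: A i by rewrite hx set11.
      rewrite inE => /andP[xA xU].
      exists x; split => //; apply/eqP; rewrite eqEcard; apply/andP; split.
        apply/subsetP => y yA; rewrite in_setD1 (subsetP (allU i) _ yA) andbT.
        by apply: contraNneq xA => <-.
      have := cardsD1 x U; rewrite xU Acard cU; lia.
    have [a ha] := fin_all_exists ex.
    have ainj : injective a.
      by move=> i j aij; apply: Ainj; rewrite (proj2 (ha i)) (proj2 (ha j)) aij.
    exists U, a; split => //; last 2 first.
    - by move=> i; case: (ha i).
    - by move=> i; case: (ha i).
    move=> u v uU vU uv.
    have [i ai] : exists i, a i \notin [set u; v].
      apply/existsP; apply: contraT; rewrite negb_exists => /forallP H.
      have := subset_leq_card (_ : [set a i | i in [set: 'I_n]] \subset [set u; v]).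
      rewrite card_imset // cardsT card_ord cards2 uv.
      move=> h; have : n <= 2 by apply: h; apply/subsetP => x /imsetP [i _ ->];
        exact: negbNE (H i).
      lia.
    apply: (Acl i) => //; rewrite (proj2 (ha i)) in_setD1 ?uU ?vU ?andbT.
    - by apply: contraNneq ai => <-; rewrite !inE eqxx.
    - by apply: contraNneq ai => <-; rewrite !inE eqxx orbT.
  right.
  have Ij : I \subset A j.
    apply/subsetP => w wI; apply: contraT => wAj.
    by move: nj; rewrite (key j w wI wAj) subsetDl.
  have [x xAj xU] := subsetPn nj.
  have xI : x \notin I by apply: contraNN xU; apply: (subsetP IU).
  have Aj : A j = x |: I.
    apply/eqP; rewrite eq_sym eqEcard subUset sub1set xAj Ij /=.
    rewrite cardsU1 xI cI Acard; lia.
  have allI i : I \subset A i.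
    apply/subsetP => w wI; apply: contraT => wAi.
    have Ai := key i w wI wAi.
    have nij : i != j.
      by apply: contraNneq nj => <-; rewrite Ai subsetDl.
    have sub : A i :&: A j \subset I :\ w.
      apply/subsetP => y; rewrite inE Ai Aj !inE => /andP[/andP[yw yU]].
      case/orP => [/eqP yx|->]; last by rewrite yw.
      by rewrite -yx /U inE yU in xU.
    have := subset_leq_card sub; rewrite (Aint i j nij).
    have := cardsD1 w I; rewrite wI cI; lia.
  have ex i : exists x, x \notin I /\ A i = x |: I.
    have : #|A i :\: I| == 1.
      by rewrite cardsD (setIidPr (allI i)) cI Acard; apply/eqP; lia.
    move/cards1P => [z hx].
    have : z \in A i :\: I by rewrite hx set11.
    rewrite inE => /andP[xI' xA].
    exists z; split => //; apply/eqP; rewrite eq_sym eqEcard subUset sub1set xA allI /=.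
    rewrite cardsU1 xI' cI Acard; lia.
  have [a ha] := fin_all_exists ex.
  exists I, a; split => //.
  - by move=> u v uI vI; apply: (Acl i0); [move: uI|move: vI]; rewrite inE => /andP[].
  - by move=> p q aij; apply: Ainj; rewrite (proj2 (ha p)) (proj2 (ha q)) aij.
  - by move=> i; case: (ha i).
  - by move=> i; case: (ha i).
  split; first by left.
  by move=> h; have := @star_bound _ _ _ _ _ star; lia.
by split; [right|].

Qed.
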